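(* For every dimension $d\ge3$ and every integer $k\ge3$ there exists a $d$-dimensional lattice polytope $P\subseteq\mathbb{R}^d$ with $\mathrm{width}(P)=k$ such that for every integer $t\ge2$ there is a lattice point in $tP$ which is not a sum of $t$ lattice points of $P$. (For $d=3$ one can take $P=\mathrm{conv}(\{(3,0,-1),(0,2,-1)\}\cup[0,k]^3)$, and for $d>3$ its product with $[0,k]^{d-3}$.)
   Context: A lattice polytope is the convex hull of finitely many points of $\mathbb{Z}^d$. $\mathrm{width}(P)=\min_{u\in(\mathbb{Z}^d)^*\setminus\{0\}}\max_{x,y\in P}|u(x)-u(y)|$. *)

(* Defs.v *)
From HB Require Import structures.
From mathcomp Require Import all_boot all_order all_algebra.
Set Implicit Arguments. Unset Strict Implicit. Unset Printing Implicit Defensive.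
Import Order.TTheory GRing.Theory Num.Theory.
Local Open Scope ring_scope.

Section LatticePolytopes.
Variable R : realFieldType.
Variable d : nat.

Definition lpt (z : 'rV[int]_d) : 'rV[R]_d := map_mx (fun a : int => a%:~R) z.

(* A lattice polytope is given by a finite list V of lattice points;
   P = conv(V).  x \in conv(V) iff x is a convex combination of V. *)
Definition in_poly (V : seq 'rV[int]_d) (x : 'rV[R]_d) : Prop :=
  exists w : 'I_(size V) -> R,
    (forall i, 0 <= w i) /\ \sum_(i < size V) w i = 1 /\
    x = \sum_(i < size V) w i *: lpt (V`_i).

(* dimension of P = dimension of its affine hull
   = rank of the differences v_i - v_0 *)
Definition poly_dim (V : seq 'rV[int]_d) : nat :=
  \rank (\matrix_(i < size V) lpt (V`_i - V`_0)).

Definition lin (u : 'rV[int]_d) (x : 'rV[R]_d) : R :=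
  \sum_(i < d) (u 0 i)%:~R * x 0 i.

(* width(P) = w : the minimum over nonzero integer functionals u of
   max_{x,y in P} |u(x) - u(y)| equals w. *)
Definition is_width (V : seq 'rV[int]_d) (w : R) : Prop :=
  (exists u : 'rV[int]_d, u != 0 /\
     forall x y, in_poly V x -> in_poly V y -> `|lin u x - lin u y| <= w) /\
  (forall u : 'rV[int]_d, u != 0 ->
     exists x y, [/\ in_poly V x, in_poly V y & w <= `|lin u x - lin u y|]).

Definition in_dilate (t : nat) (V : seq 'rV[int]_d) (z : 'rV[int]_d) : Prop :=
  exists x, in_poly V x /\ lpt z = t%:R *: x.

Definition sum_of_lattice_pts (t : nat) (V : seq 'rV[int]_d) (z : 'rV[int]_d)
  : Prop :=
  exists p : 'I_t -> 'rV[int]_d,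
    (forall i, in_poly V (lpt (p i))) /\ \sum_(i < t) p i = z.

End LatticePolytopes.

(* Main.v *)
Require Import Defs.
From HB Require Import structures.
From mathcomp Require Import all_boot all_order all_algebra.
From mathcomp Require Import zify ring lra.
Import Order.TTheory GRing.Theory Num.Theory.
Local Open Scope ring_scope.

Section Gen.
Variable R : realFieldType.
Variable d : nat.

Lemma mem_in_poly (V : seq 'rV[int]_d) v : v \in V -> in_poly V (lpt R v).
Proof.
move=> vV; have Hi : (index v V < size V)%N by rewrite index_mem.
exists (fun i : 'I_(size V) => if val i == index v V then 1 else 0 : R); split.
  by move=> i; case: ifP.
split.
  rewrite (bigD1 (Ordinal Hi)) //= eqxx big1 ?addr0 // => j.
  by rewrite -val_eqE /= => /negbTE ->.
rewrite (bigD1 (Ordinal Hi)) //= eqxx scale1r big1 ?addr0 ?nth_index //.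
by move=> j; rewrite -val_eqE /= => /negbTE ->; rewrite scale0r.
Qed.

Lemma in_poly_convex (V : seq 'rV[int]_d) x y (l : R) :
  in_poly V x -> in_poly V y -> 0 <= l -> l <= 1 ->
  in_poly V (l *: x + (1 - l) *: y).
Proof.
move=> [w1 [w1p [w1s ->]]] [w2 [w2p [w2s ->]]] l0 l1.
exists (fun i => l * w1 i + (1 - l) * w2 i); split.
  by move=> i; rewrite addr_ge0 // mulr_ge0 // subr_ge0.
split.
  by rewrite big_split /= -!mulr_sumr w1s w2s !mulr1 addrC subrK.
rewrite !scaler_sumr -big_split /=; apply: eq_bigr => i _.
by rewrite !scalerA scalerDl.
Qed.

Lemma lin_sum (u : 'rV[int]_d) (n : nat) (w : 'I_n -> R) (y : 'I_n -> 'rV[R]_d) :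
  lin u (\sum_(i < n) w i *: y i) = \sum_(i < n) w i * lin u (y i).
Proof.
rewrite /lin.
under eq_bigr => j _ do rewrite summxE mulr_sumr.
rewrite exchange_big /=; apply: eq_bigr => i _.
rewrite mulr_sumr; apply: eq_bigr => j _.
by rewrite mxE mulrCA.
Qed.

Lemma valid_ineq (V : seq 'rV[int]_d) (u : 'rV[int]_d) (c : R) x :
  (forall v, v \in V -> c <= lin u (lpt R v)) -> in_poly V x -> c <= lin u x.
Proof.
move=> H [w [wp [ws ->]]]; rewrite lin_sum.
have -> : c = \sum_(i < size V) w i * c by rewrite -mulr_suml ws mul1r.
apply: ler_sum => i _; apply: ler_wpM2l => //; apply: H; exact: mem_nth.
Qed.

Lemma lin_lpt (u p : 'rV[int]_d) :
  lin u (lpt R p) = (\sum_(i < d) u 0 i * p 0 i)%:~R.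
Proof.
rewrite /lin rmorph_sum; apply: eq_bigr => i _.
by rewrite mxE rmorphM.
Qed.

End Gen.
Section Spec.
Variable R : realFieldType.
Variable n : nat.
Local Notation d := n.+3.

Definition vec (f : nat -> int) : 'rV[int]_d := \row_(i < d) f i.
Definition f3 (a b c : int) (m : nat) : int :=
  match m with 0 => a | 1 => b | 2 => c | _ => 0 end.
Definition fe (k j m : nat) : int := if m == j then k%:Z else 0.
Definition Vs (k : nat) : seq 'rV[int]_d :=
  vec (f3 0 0 0) :: [seq vec (fe k j) | j <- iota 0 d] ++
  [:: vec (f3 3 0 (-1)); vec (f3 0 2 (-1))].

Definition i0 : 'I_d := @Ordinal d 0 isT.
Definition i1 : 'I_d := @Ordinal d 1 isT.
Definition i2 : 'I_d := @Ordinal d 2 isT.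

Lemma sum3 (V : nmodType) (F : 'I_d -> V) :
  (forall i : 'I_d, (3 <= val i)%N -> F i = 0) ->
  \sum_(i < d) F i = F i0 + F i1 + F i2.
Proof.
move=> HF; rewrite 3!big_ord_recl big1 ?addr0.
  rewrite addrA; congr (F _ + F _ + F _); exact: val_inj.
by move=> i _; apply: HF.
Qed.

Lemma lin3Z (a b c : int) (p : 'rV[int]_d) :
  \sum_(i < d) vec (f3 a b c) 0 i * p 0 i = a * p 0 i0 + b * p 0 i1 + c * p 0 i2.
Proof.
rewrite sum3 ?mxE //.
by move=> [[|[|[|m]]] Hm] //= _; rewrite mxE mul0r.
Qed.

Lemma lin3R (a b c : int) (x : 'rV[R]_d) :
  lin (vec (f3 a b c)) x = a%:~R * x 0 i0 + b%:~R * x 0 i1 + c%:~R * x 0 i2.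
Proof.
rewrite /lin sum3 ?mxE //.
by move=> [[|[|[|m]]] Hm] //= _; rewrite mxE mul0r.
Qed.

Lemma valid3 (k : nat) (a b c e : int) p :
  (forall v, v \in Vs k -> e <= a * v 0 i0 + b * v 0 i1 + c * v 0 i2) ->
  in_poly (Vs k) (lpt R p) -> e <= a * p 0 i0 + b * p 0 i1 + c * p 0 i2.
Proof.
move=> H Hp.
have := @valid_ineq R d (Vs k) (vec (f3 a b c)) e%:~R (lpt R p) _ Hp.
rewrite lin_lpt lin3Z ler_int; apply=> v vV.
by rewrite lin_lpt lin3Z ler_int; apply: H.
Qed.

Lemma Vs_ind k (P : 'rV[int]_d -> Prop) :
  P (vec (f3 0 0 0)) -> (forall j, (j < d)%N -> P (vec (fe k j))) ->
  P (vec (f3 3 0 (-1))) -> P (vec (f3 0 2 (-1))) ->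
  forall v, v \in Vs k -> P v.
Proof.
move=> H0 He HA HB v; rewrite inE mem_cat => /orP [/eqP->//|/orP []].
  by move=> /mapP [j]; rewrite mem_iota add0n => /andP [_ Hj] ->; apply: He.
by rewrite !inE => /orP [] /eqP ->.
Qed.

End Spec.
Section Dim.
Variable R : realFieldType.
Variable n : nat.
Local Notation d := n.+3.

Lemma f30 m : f3 0 0 0 m = 0.
Proof. by case: m => [|[|[|m]]]. Qed.

Lemma Vs_nth k (i : 'I_d) : (Vs n k)`_(i.+1) = vec n (fe k i).
Proof.
rewrite /Vs (_ : forall (x : 'rV[int]_d) s m, (x :: s)`_m.+1 = s`_m) // nth_cat size_map size_iota ltn_ord (nth_map 0) ?size_iota //.
by rewrite nth_iota.
Qed.

Lemma dim_Vs k : (0 < k)%N -> poly_dim R (Vs n k) = d.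
Proof.
move=> k0; rewrite /poly_dim.
set N := size (Vs n k).
have HN : forall i : 'I_d, (i.+1 < N)%N.
  move=> i; rewrite /N /Vs /= size_cat size_map size_iota; have := ltn_ord i; lia.
set M := \matrix_(i < N) _.
pose S : 'M[R]_(d, N) := \matrix_(i, j) (if val j == (val i).+1 then 1 else 0).
have SM : S *m M = k%:R *: 1%:M.
  apply/matrixP => i j; rewrite !mxE (bigD1 (Ordinal (HN i))) //= big1.
    rewrite !mxE eqxx mul1r addr0 Vs_nth /= !mxE f30 subr0 /fe.
    rewrite eq_sym; case: (i =P j) => [->|/eqP ne]; first by rewrite !eqxx mulr1.
    have ne' : (val i == val j) = false by apply/negbTE; rewrite val_eqE.
    by rewrite ?ne' /= mulr0.
  move=> l; rewrite -val_eqE /= !mxE => /negbTE ->; exact: mul0r.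
apply: anti_leq; rewrite rank_leq_col /=.
apply: (leq_trans _ (mxrankM_maxr S M)).
by rewrite SM mxrank_scale_nz ?mxrank1 // pnatr_eq0 -lt0n.
Qed.
End Dim.
Section Width.
Variable R : realFieldType.
Variable n : nat.
Local Notation d := n.+3.

Lemma check3 k (a b c e : int) : e <= 0 -> e <= 3 * a - c -> e <= 2 * b - c ->
  e <= a * k%:Z -> e <= b * k%:Z -> e <= c * k%:Z ->
  forall v, v \in Vs n k -> e <= a * v 0 (i0 n) + b * v 0 (i1 n) + c * v 0 (i2 n).
Proof.
move=> h0 hA hB h1 h2 h3; apply: Vs_ind; rewrite ?mxE /=; try lia.
by move=> [|[|[|j]]] _; rewrite !mxE /fe /=; lia.
Qed.

Lemma valid3R k (a b c e : int) (x : 'rV[R]_d) :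
  (forall v, v \in Vs n k -> e <= a * v 0 (i0 n) + b * v 0 (i1 n) + c * v 0 (i2 n)) ->
  in_poly (Vs n k) x ->
  e%:~R <= a%:~R * x 0 (i0 n) + b%:~R * x 0 (i1 n) + c%:~R * x 0 (i2 n).
Proof.
move=> H Hp; rewrite -lin3R; apply: (@valid_ineq R d (Vs n k) _ _ x _ Hp) => v vV.
by rewrite lin_lpt lin3Z ler_int; apply: H.
Qed.

Lemma width_Vs k : (3 <= k)%N -> is_width (Vs n k) (k%:R : R).
Proof.
move=> k3; split.
  exists (vec n (f3 1 0 0)); split.
    by apply/eqP => /rowP /(_ (i0 n)); rewrite !mxE.
  move=> x y Hx Hy.
  have B1 (z : 'rV[R]_d) : in_poly (Vs n k) z -> 0 <= z 0 (i0 n) <= k%:R.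
    move=> Hz; apply/andP; split.
      have := @valid3R k 1 0 0 0 z; rewrite !mul0r !addr0 mul1r; apply => //.
      by apply: check3; lia.
    have := @valid3R k (-1) 0 0 (- k%:Z) z; rewrite !mul0r !addr0.
    rewrite mulN1r mulrNz lerN2; apply => //.
    by apply: check3; lia.
  move: (B1 _ Hx) (B1 _ Hy); rewrite !lin3R !mul0r !addr0 !mul1r.
  move=> /andP [h1 h2] /andP [h3 h4]; rewrite ler_norml; apply/andP; split; lra.
move=> u un.
have [j uj] : exists j, u 0 j != 0.
  case: (pickP (fun j => u 0 j != 0)) => [j uj|H]; first by exists j.
  move: un; have -> : u = 0; last by rewrite eqxx.
  by apply/rowP => j; rewrite mxE; apply/eqP; rewrite -[_ == _]negbK H.
exists (lpt R (vec n (fe k j))), (lpt R (vec n (f3 0 0 0))); split.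
- apply: mem_in_poly; rewrite inE mem_cat; apply/orP; right; apply/orP; left.
  by apply/mapP; exists (val j); rewrite // mem_iota add0n ltn_ord.
- by apply: mem_in_poly; exact: mem_head.
rewrite !lin_lpt.
have -> : \sum_(i < d) u 0 i * vec n (f3 0 0 0) 0 i = 0.
  by apply: big1 => i _; rewrite mxE f30 mulr0.
rewrite (bigD1 j) //= big1 ?addr0; last first.
  move=> i /negbTE ne; rewrite mxE /fe.
  have -> : (val i == val j) = false by rewrite val_eqE.
  by rewrite mulr0.
rewrite mxE /fe eqxx -intrB -intr_norm (_ : k%:R = (k%:Z)%:~R) // ler_int.
rewrite subr0; move: uj; move: (u 0 j) => a ha; nia.
Qed.
End Width.
Section NonIDP.
Variable R : realFieldType.
Variable n : nat.
Local Notation d := n.+3.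

Lemma point_ineq (k X Y H : int) : 0 <= k -> 0 <= X -> X <= 2 -> 0 <= Y -> -1 <= H ->
  0 <= 2 * X + 3 * Y + 6 * H -> -6 - 3 * k <= -2 * X + -3 * Y + 3 * k * H ->
  0 <= Y + 2 * H.
Proof.
move=> k0 X0 X2 Y0 H1 h1 h2.
have [hH|hH] : H = -1 \/ 0 <= H by lia.
  by move: h2; rewrite hH; lia.
lia.
Qed.

Definition zpt (t : nat) := vec n (f3 2 (2 * t%:Z - 3) (1 - t%:Z)).

Lemma not_sum k t : (3 <= k)%N -> (2 <= t)%N -> ~ sum_of_lattice_pts R t (Vs n k) (zpt t).
Proof.
move=> k3 t2 [p [Hp Hs]].
have coord (j : 'I_d) : \sum_(i < t) p i 0 j = zpt t 0 j.
  by rewrite -Hs summxE.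
have SX := coord (i0 n); have SY := coord (i1 n); have SH := coord (i2 n).
rewrite !mxE /= in SX SY SH.
set X := fun i => p i 0 (i0 n); set Y := fun i => p i 0 (i1 n);
set H := fun i => p i 0 (i2 n).
have X0 i : 0 <= X i.
  have := @valid3 R n k 1 0 0 0 (p i); rewrite /X !mul0r !addr0 mul1r; apply => //.
  by apply: check3; lia.
have Y0 i : 0 <= Y i.
  have := @valid3 R n k 0 1 0 0 (p i); rewrite /Y !mul0r add0r addr0 mul1r; apply => //.
  by apply: check3; lia.
have H1 i : -1 <= H i.
  have := @valid3 R n k 0 0 1 (-1) (p i); rewrite /H !mul0r !add0r mul1r; apply => //.
  by apply: check3; lia.
have I1 i : 0 <= 2 * X i + 3 * Y i + 6 * H i.
  have := @valid3 R n k 2 3 6 0 (p i); apply => //.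
  by apply: check3; lia.
have I2 i : -6 - 3 * k%:Z <= -2 * X i + -3 * Y i + 3 * k%:Z * H i.
  have := @valid3 R n k (-2) (-3) (3 * k%:Z) (-6 - 3 * k%:Z) (p i); apply => //.
  by apply: check3; lia.
case: (pickP (fun i => 3 <= X i)) => [i hi | HX].
  move: SX; rewrite (bigD1 i) //=.
  have : 0 <= \sum_(j < t | j != i) X j by apply: sumr_ge0 => j _.
  by rewrite /X in hi * => a b; have := lerD hi a; rewrite addr0 b.
have S0 : 0 <= \sum_(i < t) (Y i + 2 * H i).
  apply: sumr_ge0 => i _; apply: (@point_ineq k%:Z) => //.
  by move: (HX i) => /= /negbT; rewrite -ltNge; lia.
move: S0; rewrite big_split /= -mulr_sumr.
rewrite /Y /H SY SH; lia.
Qed.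

End NonIDP.
Lemma natzR (R : ringType) (m : nat) : (m%:Z)%:~R = m%:R :> R. Proof. by []. Qed.
Section Dilate.
Variable R : realFieldType.
Variable n : nat.
Local Notation d := n.+3.

Lemma in_dil k t : (3 <= k)%N -> (2 <= t)%N -> in_dilate R t (Vs n k) (zpt n t).
Proof.
move=> k3 t2.
set T : R := t%:R; set K : R := k%:R.
have T2 : 2 <= T by rewrite /T (ler_nat R 2 t).
have K3 : 3 <= K by rewrite /K (ler_nat R 3 k).
set mu := (2 * (T - 1))^-1; set be := (2 * K)^-1; set l1 := (T - 1) / T.
set s := mu *: lpt R (vec n (f3 3 0 (-1))) + (1 - mu) *: lpt R (vec n (f3 0 2 (-1))).
set q := be *: lpt R (vec n (fe k 0)) + (1 - be) *: lpt R (vec n (f3 0 0 0)).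
exists (l1 *: s + (1 - l1) *: q); split.
  have mA : vec n (f3 3 0 (-1)) \in Vs n k by rewrite !(inE, mem_cat) eqxx !orbT.
  have mB : vec n (f3 0 2 (-1)) \in Vs n k by rewrite !(inE, mem_cat) eqxx !orbT.
  have m0 : vec n (f3 0 0 0) \in Vs n k by exact: mem_head.
  have me : vec n (fe k 0) \in Vs n k.
    rewrite inE mem_cat; apply/orP; right; apply/orP; left.
    by apply/mapP; exists 0%N.
  apply: in_poly_convex.
  - apply: in_poly_convex; try exact: mem_in_poly.
      by rewrite invr_ge0; lra.
    by rewrite invf_le1; lra.
  - apply: in_poly_convex; try exact: mem_in_poly.
      by rewrite invr_ge0; lra.
    by rewrite invf_le1; lra.
  - by rewrite divr_ge0 //; lra.
  - by rewrite ler_pdivrMr; lra.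
have Tn0 : T != 0 by apply/eqP; lra.
have T1n0 : T - 1 != 0 by apply/eqP; lra.
have Kn0 : K != 0 by apply/eqP; lra.
apply/rowP => j; rewrite !mxE.
case: j => [[|[|[|m]]] Hm]; rewrite /= ?mxE /=.
all: rewrite /l1 /mu /be /fe /= ?(intrD, intrM, intrN, intrB) ?natzR -/T -/K.
all: field; rewrite ?Tn0 ?T1n0 ?Kn0 //. Qed.
End Dilate.

Theorem proposition2p6 (R : realFieldType) (d k : nat) :
  (3 <= d)%N -> (3 <= k)%N ->
  exists V : seq 'rV[int]_d,
    [/\ poly_dim R V = d,
        is_width V (k%:R : R)
      & forall t : nat, (2 <= t)%N ->
          exists z : 'rV[int]_d,
            in_dilate R t V z /\ ~ sum_of_lattice_pts R t V z].
Proof.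
case: d => [|[|[|n]]] // _ k3.
exists (Vs n k); split.
- by apply: dim_Vs; lia.
- exact: width_Vs.
- move=> t t2; exists (zpt n t); split; [exact: in_dil | exact: not_sum].
Qed.
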